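(* Let $\mathbf{A}$ be a three-element Mal'cev algebra whose monolith $\mu$ is Abelian. Then $(0_A:\mu)=\mu$.
   Context: A Mal'cev algebra has a term $d$ with $d(y,x,x)\approx d(x,x,y)\approx y$. The monolith of $\mathbf{A}$ is the least congruence strictly above the equality relation $0_A$ (it is $1_A=A^2$ if $\mathbf{A}$ is simple). For congruences $\alpha,\beta$, $\alpha$ centralizes $\beta$ if the relation $\{(x,y,z,d(x,y,z)): x\,\alpha\,y\,\beta\,z\}$ is preserved by all operations of $\mathbf{A}$; $\alpha$ is Abelian if $\alpha$ centralizes $\alpha$; the centralizer $(0_A:\alpha)$ is the largest congruence $\delta$ such that $\alpha$ centralizes $\delta$. *)

(* Defs.v *)
From mathcomp Require Import all_boot.
Set Implicit Arguments. Unset Strict Implicit. Unset Printing Implicit Defensive.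

Section UA.
Variables (T : finType) (I : Type) (ar : I -> nat)
          (op : forall i : I, ('I_(ar i) -> T) -> T).

Inductive term (n : nat) : Type :=
| Var : 'I_n -> term n
| App : forall i : I, ('I_(ar i) -> term n) -> term n.

Fixpoint eval (n : nat) (v : 'I_n -> T) (t : term n) : T :=
  match t with
  | Var j => v j
  | App i args => op (fun k => eval v (args k))
  end.

Definition tup3 (x y z : T) : 'I_3 -> T :=
  fun k => match val k with 0 => x | 1 => y | _ => z end.

Definition top3 (t : term 3) (x y z : T) : T := eval (tup3 x y z) t.

Definition malcev_term (t : term 3) : Prop :=
  forall x y : T, top3 t y x x = y /\ top3 t x x y = y.

Definition congruence (a : rel T) : Prop :=
  [/\ forall x, a x x,
      forall x y, a x y -> a y x,
      forall x y z, a x y -> a y z -> a x z &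
      forall i (u v : 'I_(ar i) -> T), (forall k, a (u k) (v k)) ->
        a (op u) (op v)].

Definition subrel (a b : rel T) : Prop := forall x y, a x y -> b x y.

Definition is_monolith (mu : rel T) : Prop :=
  [/\ congruence mu,
      exists x y, mu x y /\ x <> y &
      forall b, congruence b -> (exists x y, b x y /\ x <> y) -> subrel mu b].

Definition Mrel (d : term 3) (a b : rel T) (x y z w : T) : Prop :=
  a x y /\ b y z /\ w = top3 d x y z.

Definition centralizes (d : term 3) (a b : rel T) : Prop :=
  forall i (x y z w : 'I_(ar i) -> T),
    (forall k, Mrel d a b (x k) (y k) (z k) (w k)) ->
    Mrel d a b (op x) (op y) (op z) (op w).

Definition abelian (d : term 3) (a : rel T) : Prop := centralizes d a a.

Definition is_centralizer (d : term 3) (a delta : rel T) : Prop :=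
  [/\ congruence delta, centralizes d a delta &
      forall b, congruence b -> centralizes d a b -> subrel b delta].

End UA.

(* Main.v *)
Require Import Defs.
From mathcomp Require Import all_boot.

Lemma term_pres (T : finType) (I : Type) (ar : I -> nat)
    (op : forall i : I, ('I_(ar i) -> T) -> T) (d : term ar 3) (a b : rel T) :
  centralizes op d a b ->
  forall n (t : term ar n) (xs ys zs ws : 'I_n -> T),
    (forall k, Mrel op d a b (xs k) (ys k) (zs k) (ws k)) ->
    Mrel op d a b (eval op xs t) (eval op ys t) (eval op zs t) (eval op ws t).
Proof.
move=> Hc n t xs ys zs ws H; elim: t => [j|i args IH] /=; first exact: H.
by apply: Hc.
Qed.

Lemma top3_pres (T : finType) (I : Type) (ar : I -> nat)
    (op : forall i : I, ('I_(ar i) -> T) -> T) (d : term ar 3) (a b : rel T)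
    x1 y1 z1 w1 x2 y2 z2 w2 x3 y3 z3 w3 :
  centralizes op d a b ->
  Mrel op d a b x1 y1 z1 w1 -> Mrel op d a b x2 y2 z2 w2 ->
  Mrel op d a b x3 y3 z3 w3 ->
  Mrel op d a b (top3 op d x1 x2 x3) (top3 op d y1 y2 y3)
     (top3 op d z1 z2 z3) (top3 op d w1 w2 w3).
Proof.
move=> Hc H1 H2 H3; apply: term_pres => //.
by case=> [[|[|[|k]]] Hk].
Qed.

Arguments top3_pres {T I ar op d a b x1 y1 z1 w1 x2 y2 z2 w2 x3 y3 z3 w3}.

Lemma four_le (T : finType) (a b c e : T) :
  a != b -> a != c -> a != e -> b != c -> b != e -> c != e -> 3 < #|T|.
Proof.
move=> ab ac ae bc be ce.
have U : uniq [:: a; b; c; e].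
  by rewrite /= !inE !negb_or ab ac ae bc be ce.
rewrite cardE; have := uniq_leq_size U (fun z _ => mem_enum T z).
by [].
Qed.

Theorem lemma4p2 (T : finType) (I : Type) (ar : I -> nat)
    (op : forall i : I, ('I_(ar i) -> T) -> T)
    (d : term ar 3) (mu : rel T) :
  #|T| = 3 ->
  malcev_term op d ->
  is_monolith op mu ->
  abelian op d mu ->
  is_centralizer op d mu mu.
Proof.
move=> HT Hd [Hmc [p [q [Hpq Hneq]]] Hmin] Hab.
split => //.
move=> b Hb Hcb x0 y0 Hb0.
case Hm0: (mu x0 y0) => //; exfalso.
case: Hmc => mr ms mt _.
case: Hb => br bs bt _.
pose phi x y z := top3 op d z x y.
have key : forall x y, b x y -> forall z, mu z x ->
    mu (phi x y z) y /\ phi y x (phi x y z) = z.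
  move=> x y bxy z mzx; split.
    have M1 : Mrel op d mu b z x x z by split=> //; split=> //; case: (Hd x z).
    have M2 : Mrel op d mu b x x x x by split=> //; split=> //; case: (Hd x x).
    have M3 : Mrel op d mu b y y y y by split=> //; split=> //; case: (Hd y y).
    case: (top3_pres Hcb M1 M2 M3) => H _.
    by move: H; rewrite /phi; case: (Hd x y) => _ ->.
  have M1 : Mrel op d mu b z x x z by split=> //; split=> //; case: (Hd x z).
  have M2 : Mrel op d mu b x x x x by split=> //; split=> //; case: (Hd x x).
  have M3 : Mrel op d mu b x x y y by split=> //; split=> //; case: (Hd x y).
  have M4 := top3_pres Hcb M1 M2 M3.
  have E1 : top3 op d z x x = z by case: (Hd x z).
  have E2 : top3 op d x x x = x by case: (Hd x x).
  have E3 : top3 op d x x y = y by case: (Hd x y).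
  rewrite E1 E2 E3 in M4.
  have M5 := top3_pres Hcb M4 M3 M2.
  case: M5 => _ [_ E]; rewrite /phi E; clear E.
  rewrite /phi E1 E2.
  have -> : top3 op d y y x = x by case: (Hd y x).
  by case: (Hd x z).
have side : forall x y, b x y -> mu x y = false -> mu p x -> False.
  move=> x y bxy mxy mpx.
  have mqx : mu q x by apply: mt (ms _ _ Hpq) mpx.
  have [mp' ep] := key x y bxy p mpx.
  have [mq' eq'] := key x y bxy q mqx.
  have nxy : forall u v, mu u x -> mu v y -> u != v.
    move=> u v ux vy; apply/eqP => euv; subst v.
    by rewrite (mt _ _ _ (ms _ _ ux) vy) in mxy.
  have: 3 < #|T|.
    apply: (@four_le _ p q (phi x y p) (phi x y q)); try by apply: nxy.
    - by apply/eqP.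
    - by apply/eqP => E; apply: Hneq; rewrite -ep -eq' E.
  by rewrite HT.
case Hpx: (mu p x0); first exact: (side x0 y0 Hb0 Hm0 Hpx).
case Hpy: (mu p y0).
  apply: (side y0 x0 (bs _ _ Hb0)) Hpy.
  by case E: (mu y0 x0) => //; rewrite (ms _ _ E) in Hm0.
have: 3 < #|T|; last by rewrite HT.
apply: (@four_le _ x0 y0 p q).
- by apply/eqP => E; subst; rewrite mr in Hm0.
- by apply/eqP => E; subst; rewrite mr in Hpx.
- by apply/eqP => E; subst; rewrite Hpq in Hpx.
- by apply/eqP => E; subst; rewrite mr in Hpy.
- by apply/eqP => E; subst; rewrite Hpq in Hpy.
- by apply/eqP.
Qed.
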